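(* Let $n,\lambda,\mu$ be positive integers with $\mu>\lambda$, and let $\mathcal{A}$ be a path decomposition of $\lambda K_n$. Then $\lambda K_n$ is $2$-extendible with respect to $(\mathcal{A},\mu K_n)$ if and only if $2|\mathcal{S}_0(\mathcal{A})|+|\mathcal{S}_1(\mathcal{A})|\le(\mu-\lambda)\frac{n(n-1)}{2}$.
   Context: Graphs may have multiple edges. $\lambda K_n$ is the loopless multigraph on $n$ vertices with every pair of distinct vertices joined by exactly $\lambda$ edges; $\lambda K_n$ is regarded as a subgraph of $\mu K_n$ on the same vertex set, and $\mu K_n\setminus\lambda K_n$ denotes the graph obtained by deleting the edges of $\lambda K_n$. A decomposition of size $k$ of a graph $G$ is an ordered $k$-tuple $(G(1),\dots,G(k))$ of spanning subgraphs of $G$ (colour classes; possibly edgeless) with pairwise disjoint edge sets whose union is $E(G)$. A path decomposition is one in which every colour class is a vertex-disjoint union of paths and cycles (two parallel edges form a cycle of length 2). $\mathcal{S}_i(\mathcal{A})$ is the set of colour classes of $\mathcal{A}$ with exactly $i$ edges. For a graph $G\subseteq H$, a path decomposition $\mathcal{A}$ of $G$ with $k$ colour classes and a positive integer $\alpha$, $G$ is $\alpha$-extendible with respect to $(\mathcal{A},H)$ if there is a graph $F\subseteq H\setminus G$ and a path decomposition $\mathcal{A}^*$ of $G\cup F$ of size $k$ whose restriction to $G$ is $\mathcal{A}$ and each $\mathcal{A}^*(i)$ has at least $\alpha$ edges. *)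

(* Defs.v *)
From mathcomp Require Import all_boot.
Set Implicit Arguments. Unset Strict Implicit. Unset Printing Implicit Defensive.

(* Edges of mu K_n on vertex set 'I_n: triples ((u, v), j) with u < v and
   j < mu; j indexes the mu parallel edges joining u and v. *)
Definition edge (n mu : nat) := {t : 'I_n * 'I_n * 'I_mu | t.1.1 < t.1.2}.

Definition eu n mu (e : edge n mu) : 'I_n := (val e).1.1.
Definition ev n mu (e : edge n mu) : 'I_n := (val e).1.2.

Definition joins n mu (e : edge n mu) (x y : 'I_n) : bool :=
  ((eu e == x) && (ev e == y)) || ((eu e == y) && (ev e == x)).

(* lambda K_n as a subgraph (edge set) of mu K_n: the parallel edges of
   index < lambda between each pair of distinct vertices. *)
Definition lamK n mu (lam : nat) : {set edge n mu} :=
  [set e : edge n mu | (val e).2 < lam].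

Definition trail n mu (es : seq (edge n mu)) (vs : seq 'I_n) : bool :=
  [&& 0 < size es, size vs == (size es).+1, uniq es &
      all (fun p => joins p.1 p.2.1 p.2.2) (zip es (zip vs (behead vs)))].

Definition is_path n mu (es : seq (edge n mu)) (vs : seq 'I_n) : bool :=
  trail es vs && uniq vs.

(* a cycle (of length >= 2; length 2 = two parallel edges): a closed trail
   v_0 .. v_m = v_0 whose vertices v_1 .. v_m are pairwise distinct *)
Definition is_cycle n mu (es : seq (edge n mu)) (vs : seq 'I_n) : bool :=
  [&& trail es vs, 1 < size es &
      match vs with x :: tl => uniq tl && (last x tl == x) | [::] => false end].

Definition paths_and_cycles n mu (C : {set edge n mu}) : Prop :=
  exists comps : seq (seq (edge n mu) * seq 'I_n),
    [/\ all (fun c => is_path c.1 c.2 || is_cycle c.1 c.2) comps,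
        uniq (flatten (map (fun c => c.1) comps)),
        C = [set e in flatten (map (fun c => c.1) comps)] &
        uniq (flatten (map (fun c => undup c.2) comps))].

Definition decomposition n mu (G : {set edge n mu}) k
    (A : 'I_k -> {set edge n mu}) : Prop :=
  (forall i j, i != j -> [disjoint A i & A j]) /\
  \bigcup_(i < k) A i = G.

Definition path_decomposition n mu (G : {set edge n mu}) k
    (A : 'I_k -> {set edge n mu}) : Prop :=
  decomposition G A /\ forall i, paths_and_cycles (A i).

(* number of colour classes with exactly i edges: |S_i(A)| (classes are
   counted as indexed members of the k-tuple) *)
Definition nS n mu k (A : 'I_k -> {set edge n mu}) (i : nat) : nat :=
  #|[set c : 'I_k | #|A c| == i]|.

Definition extendible n mu (alpha : nat) (G H : {set edge n mu}) k
    (A : 'I_k -> {set edge n mu}) : Prop :=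
  exists (F : {set edge n mu}) (Astar : 'I_k -> {set edge n mu}),
    [/\ F \subset H :\: G,
        path_decomposition (G :|: F) Astar,
        forall i, Astar i :&: G = A i &
        forall i, alpha <= #|Astar i|].

(* Main.v *)
Require Import Defs.
From mathcomp Require Import all_boot.
Set Implicit Arguments. Unset Strict Implicit. Unset Printing Implicit Defensive.

Lemma subset_of_card (T : finType) (C : {set T}) m :
  m <= #|C| -> exists D : {set T}, D \subset C /\ #|D| = m.
Proof.
elim: m => [|m IH] lt.
  by exists set0; rewrite sub0set cards0.
have [D [DC cD]] := IH (ltnW lt).
have : 0 < #|C :\: D|.
  by rewrite -(cardsID D C) (setIidPr DC) cD in lt; rewrite -(ltn_add2l m) addn0.
case/card_gt0P => x; rewrite inE => /andP [xD xC].
exists (x |: D); split; first by rewrite subUset sub1set xC.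
by rewrite cardsU1 xD cD.
Qed.

Lemma alloc (I T : finType) (d : I -> nat) (r : seq I) (C : {set T}) :
  uniq r -> \sum_(i <- r) d i <= #|C| ->
  exists Fs : I -> {set T},
    (forall i, i \in r -> Fs i \subset C /\ #|Fs i| = d i) /\
    (forall i j, i \in r -> j \in r -> i != j -> [disjoint Fs i & Fs j]).
Proof.
elim: r C => [|a r IH] C /=.
  by move=> _ _; exists (fun _ => set0); split.
case/andP => ar ur; rewrite big_cons => le.
have [D [DC cD]] := subset_of_card (leq_trans (leq_addr _ _) le).
have le' : \sum_(i <- r) d i <= #|C :\: D|.
  have e := cardsID D C; rewrite (setIidPr DC) in e.
  by rewrite -(leq_add2l (d a)) -cD e cD.
have [Fs [H1 H2]] := IH _ ur le'.
exists (fun i => if i == a then D else Fs i); split.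
  move=> i; rewrite inE; case: eqP => [-> //|_] /= ir.
  by have [s c] := H1 i ir; split => //; apply: subset_trans s (subsetDl _ _).
move=> i j; rewrite !inE.
have dis : forall i, i \in r -> [disjoint D & Fs i].
  move=> i0 i0r; have [s _] := H1 i0 i0r.
  by rewrite -setI_eq0; apply/eqP/setP => x; rewrite !inE;
     apply/negP => /andP [xD xF]; move/subsetP: s => /(_ x xF); rewrite inE xD.
case: (eqVneq i a) => [->|ia]; case: (eqVneq j a) => [->|ja] //= ir jr ij.
- by apply: dis.
- by rewrite disjoint_sym; apply: dis.
- by apply: H2.
Qed.

Lemma card_bigcup_disj (I T : finType) (B : I -> {set T}) (r : seq I) :
  uniq r -> (forall i j, i != j -> [disjoint B i & B j]) ->
  #|\bigcup_(i <- r) B i| = \sum_(i <- r) #|B i|.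
Proof.
move=> ur dis; elim: r ur => [|a r IH] /=; first by rewrite !big_nil cards0.
case/andP => ar ur; rewrite !big_cons cardsU IH //.
suff -> : B a :&: \bigcup_(j <- r) B j = set0 by rewrite cards0 subn0.
apply/setP => x; rewrite !inE; apply/negP => /andP [xa]; rewrite bigcup_seq => /bigcupP [j jr xj].
have aj : a != j by apply/eqP => e; rewrite e jr in ar.
by move: (dis _ _ aj); rewrite -setI_eq0 => /eqP /setP /(_ x); rewrite !inE xa xj.
Qed.

Section Two.
Variables n mu : nat.
Implicit Types e : edge n mu.

Lemma joins_uv e : joins e (eu e) (ev e).
Proof. by rewrite /joins !eqxx. Qed.
Lemma joins_vu e : joins e (ev e) (eu e).
Proof. by rewrite /joins !eqxx orbT. Qed.
Lemma euv e : eu e < ev e.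
Proof. exact: (valP e). Qed.

Lemma pc_path2 e1 e2 x y z : e1 != e2 -> joins e1 x y -> joins e2 y z ->
  x != y -> x != z -> y != z -> paths_and_cycles [set e1; e2].
Proof.
move=> e12 j1 j2 xy xz yz.
exists [:: ([:: e1; e2], [:: x; y; z])]; split.
- by rewrite /= /is_path /trail /= j1 j2 !inE e12 /= (negbTE xy) (negbTE xz) yz.
- by rewrite /= mem_seq1 e12.
- by rewrite /=; apply/setP => e0; rewrite !inE.
- by rewrite /= !(mem_seq2, mem_seq1, negbTE xy, negbTE xz, negbTE yz) /= !(mem_seq2, mem_seq1, negbTE xy, negbTE xz, negbTE yz).
Qed.

Lemma pc_cycle2 e1 e2 x y : e1 != e2 -> joins e1 x y -> joins e2 y x ->
  x != y -> paths_and_cycles [set e1; e2].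
Proof.
move=> e12 j1 j2 xy.
have yx : y != x by rewrite eq_sym.
exists [:: ([:: e1; e2], [:: x; y; x])]; split.
- by rewrite /= /is_cycle /trail /= j1 j2 !(mem_seq2, mem_seq1, negbTE xy, negbTE yx, eqxx) /= e12 orbT.
- by rewrite /= mem_seq1 e12.
- by rewrite /=; apply/setP => e0; rewrite !inE.
- by rewrite /= !(mem_seq2, mem_seq1, negbTE xy, negbTE yx, eqxx) /= !(mem_seq2, mem_seq1, negbTE xy, negbTE yx).
Qed.

Lemma pc_disj2 e1 e2 : e1 != e2 ->
  eu e1 != eu e2 -> eu e1 != ev e2 -> ev e1 != eu e2 -> ev e1 != ev e2 ->
  paths_and_cycles [set e1; e2].
Proof.
move=> e12 ac ad bc bd.
have ab : eu e1 != ev e1 by rewrite neq_ltn euv.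
have cd : eu e2 != ev e2 by rewrite neq_ltn euv.
exists [:: ([:: e1], [:: eu e1; ev e1]); ([:: e2], [:: eu e2; ev e2])]; split.
- by rewrite /= /is_path /trail /= !joins_uv !(mem_seq2, mem_seq1, negbTE ab, negbTE cd).
- by rewrite /= !(mem_seq2, mem_seq1, negbTE e12).
- by rewrite /=; apply/setP => e0; rewrite !inE.
- by rewrite /= !(mem_seq2, mem_seq1, negbTE ab, negbTE cd) /= !(in_cons, in_nil, negbTE ab, negbTE cd, negbTE ac, negbTE ad, negbTE bc, negbTE bd).
Qed.

Lemma ord_lt_neq (x y : 'I_n) : x < y -> x != y.
Proof. by move=> h; apply/eqP => e; rewrite e ltnn in h. Qed.

Lemma pc_two (C : {set edge n mu}) : #|C| = 2 -> paths_and_cycles C.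
Proof.
move/eqP/cards2P => [e1 [e2 [e12 ->]]].
have h1 := euv e1; have h2 := euv e2.
case: (eqVneq (eu e1) (eu e2)) => ac; case: (eqVneq (ev e1) (ev e2)) => bd.
- apply: (pc_cycle2 e12 (joins_uv e1)); first by rewrite ac bd joins_vu.
  exact: ord_lt_neq.
- apply: (@pc_path2 _ _ (ev e1) (eu e1) (ev e2) e12 (joins_vu e1)).
  + by rewrite ac joins_uv.
  + by rewrite eq_sym ord_lt_neq.
  + exact: bd.
  + by rewrite ac ord_lt_neq.
- case: (eqVneq (eu e1) (ev e2)) => ad.
    apply: (@pc_path2 _ _ (ev e1) (eu e1) (eu e2) e12 (joins_vu e1)).
    + by rewrite ad joins_vu.
    + by rewrite eq_sym ord_lt_neq.
    + by rewrite eq_sym ord_lt_neq // (leq_trans h2) // -ad ltnW.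
    + exact: ac.
  case: (eqVneq (ev e1) (eu e2)) => bc.
    apply: (@pc_path2 _ _ (eu e1) (ev e1) (ev e2) e12 (joins_uv e1)).
    + by rewrite bc joins_uv.
    + exact: ord_lt_neq.
    + by rewrite ord_lt_neq // (ltn_trans h1) // bc.
    + by rewrite bc ord_lt_neq.
  apply: (@pc_path2 _ _ (eu e1) (ev e1) (eu e2) e12 (joins_uv e1)).
  + by rewrite bd joins_vu.
  + exact: ord_lt_neq.
  + exact: ac.
  + exact: bc.
- case: (eqVneq (eu e1) (ev e2)) => ad.
    apply: (@pc_path2 _ _ (ev e1) (eu e1) (eu e2) e12 (joins_vu e1)).
    + by rewrite ad joins_vu.
    + by rewrite eq_sym ord_lt_neq.
    + by rewrite eq_sym ord_lt_neq // (leq_trans h2) // -ad ltnW.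
    + exact: ac.
  case: (eqVneq (ev e1) (eu e2)) => bc.
    apply: (@pc_path2 _ _ (eu e1) (ev e1) (ev e2) e12 (joins_uv e1)).
    + by rewrite bc joins_uv.
    + exact: ord_lt_neq.
    + by rewrite ord_lt_neq // (ltn_trans h1) // bc.
    + by rewrite bc ord_lt_neq.
  exact: pc_disj2.
Qed.
End Two.

Lemma card_ord_lt m a : a <= m -> #|[set j : 'I_m | j < a]| = a.
Proof.
move=> am.
rewrite -[LHS]muln1 -sum_nat_cond_const.
rewrite -(big_mkord (fun j => j < a) (fun _ => 1)).
rewrite (big_cat_nat (leq0n a) am) /=.
rewrite [X in _ + X]big_nat_cond [X in _ + X]big1; last first.
  by move=> j /andP [/andP [aj _]]; rewrite ltnNge aj.
rewrite addn0 big_nat_cond.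
rewrite (eq_bigl (fun j => (0 <= j < a) && true)); last by move=> j; rewrite -andbA andbb andbT.
by rewrite -big_nat_cond sum_nat_const_nat subn0 muln1.
Qed.

Lemma card_ord_ge m a : a <= m -> #|[set j : 'I_m | a <= j]| = m - a.
Proof.
move=> am.
have e : [set j : 'I_m | a <= j] = ~: [set j : 'I_m | j < a].
  by apply/setP => j; rewrite !inE -leqNgt.
by rewrite e; move: (cardsC [set j : 'I_m | j < a]); rewrite card_ord (card_ord_lt am) => h; apply/eqP; rewrite -(eqn_add2l a) h subnKC.
Qed.

Lemma card_pairs n : #|[set p : 'I_n * 'I_n | p.1 < p.2]| = n * (n - 1) %/ 2.
Proof.
rewrite -[LHS]muln1 -sum_nat_cond_const big_mkcond /=.
rewrite -(pair_big xpredT xpredT (fun (u v : 'I_n) => if u < v then 1 else 0)) /=.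
rewrite exchange_big /=.
rewrite (eq_bigr (fun v : 'I_n => (v : nat))); last first.
  move=> v _; rewrite -big_mkcond /= sum_nat_cond_const muln1.
  exact: card_ord_lt (ltnW (ltn_ord v)).
rewrite -(big_mkord xpredT (fun v => v)) bin2_sum bin2 divn2 subn1.
by [].
Qed.

Lemma card_compl n mu lam : lam <= mu ->
  #|~: lamK n mu lam| = (mu - lam) * (n * (n - 1) %/ 2).
Proof.
move=> lm.
rewrite -(card_imset _ val_inj).
have -> : val @: (~: lamK n mu lam) =
   setX [set p : 'I_n * 'I_n | p.1 < p.2] [set j : 'I_mu | lam <= j].
  apply/setP => t; rewrite !inE.
  apply/imsetP/andP.
    by case=> e; rewrite !inE -leqNgt => le ->; split => //; exact: (valP e).
  case=> h1 h2; exists (exist _ t h1) => //.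
  by rewrite !inE -leqNgt /=.
by rewrite (cardsX [set p : 'I_n * 'I_n | p.1 < p.2] [set j : 'I_mu | lam <= j]) card_pairs card_ord_ge // mulnC.
Qed.

Lemma sum_demand k n mu (A : 'I_k -> {set edge n mu}) :
  \sum_(i < k) (2 - #|A i|) = 2 * nS A 0 + nS A 1.
Proof.
have cnt : forall j, \sum_(i < k) (#|A i| == j : nat) = nS A j.
  move=> j; rewrite /nS -[RHS]muln1 -sum_nat_cond_const [RHS]big_mkcond.
  by apply: eq_bigr => i _; case: (_ == _).
rewrite (eq_bigr (fun i => 2 * (#|A i| == 0) + (#|A i| == 1))); last first.
  by move=> i _; case: #|A i| => [|[|c]].
by rewrite big_split /= -big_distrr /= !cnt.
Qed.

Lemma disjF (T : finType) (X Y : {set T}) x :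
  [disjoint X & Y] -> x \in X -> x \in Y -> False.
Proof. by move=> d xX xY; rewrite (disjointFl d xY) in xX. Qed.

Unset Implicit Arguments.
Theorem proposition3 (n lam mu : nat) (k : nat) (A : 'I_k -> {set edge n mu}) :
  0 < n -> 0 < lam -> lam < mu ->
  path_decomposition (lamK n mu lam) A ->
  (extendible 2 (lamK n mu lam) [set: edge n mu] A <->
   2 * nS A 0 + nS A 1 <= (mu - lam) * (n * (n - 1) %/ 2)).
Proof.
move=> n0 l0 lm [[disA unA] pcA].
set G := lamK n mu lam.
have AG : forall i, A i \subset G.
  by move=> i; rewrite /G -unA; apply: (bigcup_sup i).
have cC := card_compl n (ltnW lm).
rewrite -sum_demand -cC.
split.
  case=> F [Astar [FH [[disS unS] pcS] AsG ge2]].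
  pose B i := Astar i :\: G.
  have cB : forall i, 2 - #|A i| <= #|B i|.
    move=> i; rewrite leq_subLR -(AsG i) cardsID; exact: ge2.
  have disB : forall i j, i != j -> [disjoint B i & B j].
    move=> i j ij; apply: (disjointWl (subsetDl _ _)).
    by rewrite disjoint_sym; apply: (disjointWl (subsetDl _ _)); rewrite disjoint_sym; apply: disS.
  have BF : \bigcup_(i < k) B i \subset F.
    apply/bigcupsP => i _; apply/subsetP => x; rewrite inE => /andP [xG xA].
    have : x \in G :|: F by rewrite -unS; apply/bigcupP; exists i.
    by rewrite inE (negbTE xG).
  apply: (@leq_trans (\sum_(i < k) #|B i|)); first by apply: leq_sum => i _; exact: cB.
  rewrite -(card_bigcup_disj (index_enum_uniq _) disB).
  apply: (leq_trans (subset_leq_card BF)).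
  by apply: subset_leq_card; rewrite -setTD.
move=> le.
have [Fs [H1 H2]] := alloc (index_enum_uniq _) le.
have FsG : forall i, Fs i \subset ~: G by move=> i; case: (H1 i (mem_index_enum _)).
have cFs : forall i, #|Fs i| = 2 - #|A i| by move=> i; case: (H1 i (mem_index_enum _)).
have AF : forall i j x, x \in A i -> x \in Fs j -> False.
  move=> i j x xA xF; move/subsetP: (FsG j) => /(_ x xF); rewrite inE.
  by move/subsetP: (AG i) => /(_ x xA) ->.
have AFe : forall i, A i :&: Fs i = set0.
  by move=> i; apply/setP => x; rewrite !inE; apply/negP => /andP [xA xF]; apply: (AF i i x).
have cAs : forall i, #|A i :|: Fs i| = #|A i| + (2 - #|A i|).
  by move=> i; rewrite cardsU AFe cards0 subn0 cFs.
exists (\bigcup_(i < k) Fs i), (fun i => A i :|: Fs i); split.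
- by rewrite setTD; apply/bigcupsP => i _; apply: FsG.
- split; [split|].
  + move=> i j ij; rewrite -setI_eq0; apply/eqP/setP => x; rewrite !inE.
    apply/negP => /andP [/orP [xi|xi] /orP [xj|xj]].
    * exact: (disjF (disA i j ij) xi xj).
    * exact: (AF i j x).
    * exact: (AF j i x).
    * exact: (disjF (H2 i j (mem_index_enum _) (mem_index_enum _) ij) xi xj).
  + apply/setP => x; rewrite inE; apply/bigcupP/orP.
      case=> i _; rewrite inE => /orP [xA|xF]; [left|right].
        by rewrite /G -unA; apply/bigcupP; exists i.
      by apply/bigcupP; exists i.
    case.
      by rewrite /G -unA => /bigcupP [i _ xi]; exists i => //; rewrite inE xi.
    by move=> /bigcupP [i _ xi]; exists i => //; rewrite inE xi orbT.
  + move=> i; case: (leqP 2 #|A i|) => h.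
      have -> : Fs i = set0.
        by apply: cards0_eq; rewrite cFs; apply/eqP; rewrite subn_eq0.
      by rewrite setU0.
    by apply: pc_two; rewrite cAs subnKC // ltnW.
- move=> i; rewrite setIUl (setIidPl (AG i)).
  suff -> : Fs i :&: G = set0 by rewrite setU0.
  apply/setP => x; rewrite !inE; apply/negP => /andP [xF xG].
  by move/subsetP: (FsG i) => /(_ x xF); rewrite in_setC /G inE xG.
- by move=> i; rewrite cAs; case: (leqP 2 #|A i|) => h;
     [apply: leq_trans h (leq_addr _ _) | rewrite subnKC // ltnW].
Qed.
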